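(* Let $\mathbb{K}$ be a field of characteristic $0$ and consider the algebra $\mathbb{K}\langle\theta_1,\theta_3,\theta_4,\theta_5\rangle/I$, where $I$ is the two-sided ideal generated by the following elements: $\theta_1^2-\theta_1$, $\theta_4^2$, $\theta_4\theta_5$, $\theta_4\theta_1+\theta_4\theta_3-2\theta_4-\theta_5\theta_4-\theta_5^2$, $\theta_3^2-\theta_3+\theta_5-3\theta_3\theta_4-\theta_3\theta_5-\theta_1\theta_4-\theta_5\theta_1$, $\theta_3\theta_1-\theta_1-\theta_4-\tfrac12\theta_4\theta_1+\tfrac12\theta_4\theta_3+\theta_5\theta_1-\tfrac12\theta_5\theta_4+\tfrac12\theta_5^2+\theta_3\theta_4-\theta_1\theta_5-\theta_3\theta_5$, $\theta_1\theta_3-\theta_3+\theta_4+\theta_5-\tfrac32\theta_4\theta_1+\tfrac32\theta_4\theta_3-2\theta_5\theta_1-\tfrac32\theta_5\theta_4+\tfrac32\theta_5^2+3\theta_3\theta_4+\theta_3\theta_5$, $\theta_5\theta_3-\theta_4\theta_1+\theta_4\theta_3-\theta_5\theta_1-\theta_5\theta_4+\theta_5^2$, $\theta_5\theta_1\theta_5-\theta_5^2\theta_1-\theta_5\theta_4$, $\theta_5\theta_4\theta_1-\theta_5^3+\theta_5\theta_1\theta_4+\theta_5^2\theta_1$, $\theta_4\theta_1\theta_5+\theta_5^2\theta_1+\theta_5\theta_4-\theta_5^3$, $\theta_5\theta_3\theta_4+\theta_5\theta_1\theta_4$, $\theta_3\theta_5\theta_1-\theta_1\theta_5-\theta_3\theta_5+\theta_3\theta_4+\theta_5^2$,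 $\theta_4\theta_1\theta_5+\theta_4\theta_3\theta_5-\theta_5^3$, $\theta_4\theta_3\theta_5-\theta_5\theta_1\theta_5$, $\theta_1\theta_5\theta_1+\theta_1\theta_5+\theta_3\theta_5-\theta_5^2+\theta_1\theta_4-\theta_5^2\theta_1-\theta_5\theta_4-\theta_3\theta_5^2$, $\theta_1\theta_5\theta_3-2\theta_3\theta_4-\theta_1\theta_5-\theta_3\theta_5+\theta_5^2+3\theta_5\theta_4-\theta_1\theta_4+\theta_5^2\theta_1+\theta_3\theta_5^2+2\theta_5\theta_1\theta_4+2\theta_3\theta_5\theta_4$, $\theta_3\theta_4\theta_1+\theta_1\theta_4+\theta_1\theta_5+\theta_3\theta_5-\theta_5\theta_4-\theta_3\theta_5^2-\theta_5^2$. Then the set (of classes modulo $I$) $$\{\theta_4\theta_1,\theta_3,\theta_1\}\cup\{\theta_5^n: n\ge0\}\cup\{\theta_5^n\theta_4: n\ge0\}\cup\{\theta_5^n\theta_1\theta_4: n\ge0\}\cup\{\theta_5^n\theta_1: n\ge1\}\cup\{\theta_3\theta_5^n: n\ge1\}$$ $$\cup\{\theta_1\theta_5^n: n\ge1\}\cup\{\theta_3\theta_5^n\theta_4: n\ge0\}\cup\{\theta_1\theta_5^n\theta_4: n\ge1\}$$ is a system of generators for $\mathbb{K}\langle\theta_1,\theta_3,\theta_4,\theta_5\rangle/I$ as a free $\mathbb{K}$-vector space.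
   Context: $\mathbb{K}\langle\theta_1,\theta_3,\theta_4,\theta_5\rangle$ denotes the free (noncommutative) associative $\mathbb{K}$-algebra on the four letters $\theta_1,\theta_3,\theta_4,\theta_5$. *)

(* Defs.v *)
(* The free associative algebra K<t1,t3,t4,t5> is realised as
   the monoid algebra {malg K[{fmonom 'I_4}]} of the free monoid on 4 letters
   (multinomials' monalg). *)
From HB Require Import structures.
From mathcomp Require Import all_boot all_algebra.
From mathcomp.multinomials Require Import monalg.
Set Implicit Arguments. Unset Strict Implicit. Unset Printing Implicit Defensive.
Import GRing.Theory.
Local Open Scope ring_scope.

Definition freeAlg (K : fieldType) := {malg K[{fmonom 'I_4}]}.

Definition letter (K : fieldType) (i : 'I_4) : freeAlg K := << fmu i >>.
Definition th1 (K : fieldType) : freeAlg K := letter K 0.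
Definition th3 (K : fieldType) : freeAlg K := letter K 1.
Definition th4 (K : fieldType) : freeAlg K := letter K 2.
Definition th5 (K : fieldType) : freeAlg K := letter K 3.

Definition in_twosided_ideal (R : ringType) (G : R -> Prop) (f : R) : Prop :=
  exists s : seq (R * R * R),
    (forall t, t \in s -> G t.1.2) /\
    f = \sum_(t <- s) t.1.1 * t.1.2 * t.2.

Definition Igens (K : fieldType) : seq (freeAlg K) :=
  let t1 := th1 K in let t3 := th3 K in let t4 := th4 K in let t5 := th5 K in
  let h : freeAlg K := (2%:R)^-1%:A in
  let h3 : freeAlg K := (3%:R / 2%:R)%:A in
  [:: t1 ^+ 2 - t1;
      t4 ^+ 2;
      t4 * t5;
      t4 * t1 + t4 * t3 - 2%:R * t4 - t5 * t4 - t5 ^+ 2;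
      t3 ^+ 2 - t3 + t5 - 3%:R * (t3 * t4) - t3 * t5 - t1 * t4 - t5 * t1;
      t3 * t1 - t1 - t4 - h * (t4 * t1) + h * (t4 * t3) + t5 * t1
        - h * (t5 * t4) + h * t5 ^+ 2 + t3 * t4 - t1 * t5 - t3 * t5;
      t1 * t3 - t3 + t4 + t5 - h3 * (t4 * t1) + h3 * (t4 * t3)
        - 2%:R * (t5 * t1) - h3 * (t5 * t4) + h3 * t5 ^+ 2
        + 3%:R * (t3 * t4) + t3 * t5;
      t5 * t3 - t4 * t1 + t4 * t3 - t5 * t1 - t5 * t4 + t5 ^+ 2;
      t5 * t1 * t5 - t5 ^+ 2 * t1 - t5 * t4;
      t5 * t4 * t1 - t5 ^+ 3 + t5 * t1 * t4 + t5 ^+ 2 * t1;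
      t4 * t1 * t5 + t5 ^+ 2 * t1 + t5 * t4 - t5 ^+ 3;
      t5 * t3 * t4 + t5 * t1 * t4;
      t3 * t5 * t1 - t1 * t5 - t3 * t5 + t3 * t4 + t5 ^+ 2;
      t4 * t1 * t5 + t4 * t3 * t5 - t5 ^+ 3;
      t4 * t3 * t5 - t5 * t1 * t5;
      t1 * t5 * t1 + t1 * t5 + t3 * t5 - t5 ^+ 2 + t1 * t4 - t5 ^+ 2 * t1
        - t5 * t4 - t3 * t5 ^+ 2;
      t1 * t5 * t3 - 2%:R * (t3 * t4) - t1 * t5 - t3 * t5 + t5 ^+ 2
        + 3%:R * (t5 * t4) - t1 * t4 + t5 ^+ 2 * t1 + t3 * t5 ^+ 2
        + 2%:R * (t5 * t1 * t4) + 2%:R * (t3 * t5 * t4);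
      t3 * t4 * t1 + t1 * t4 + t1 * t5 + t3 * t5 - t5 * t4
        - t3 * t5 ^+ 2 - t5 ^+ 2].

Definition inI (K : fieldType) (f : freeAlg K) : Prop :=
  in_twosided_ideal (fun g => g \in Igens K) f.

Definition Bset (K : fieldType) (b : freeAlg K) : Prop :=
  let t1 := th1 K in let t3 := th3 K in let t4 := th4 K in let t5 := th5 K in
  b = t4 * t1 \/ b = t3 \/ b = t1 \/
  (exists n : nat, b = t5 ^+ n) \/
  (exists n : nat, b = t5 ^+ n * t4) \/
  (exists n : nat, b = t5 ^+ n * t1 * t4) \/
  (exists n : nat, (1 <= n)%N /\ b = t5 ^+ n * t1) \/
  (exists n : nat, (1 <= n)%N /\ b = t3 * t5 ^+ n) \/
  (exists n : nat, (1 <= n)%N /\ b = t1 * t5 ^+ n) \/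
  (exists n : nat, b = t3 * t5 ^+ n * t4) \/
  (exists n : nat, (1 <= n)%N /\ b = t1 * t5 ^+ n * t4).

(* Main.v *)
Require Import Defs.
From HB Require Import structures.
From mathcomp Require Import all_boot all_algebra.
From mathcomp.multinomials Require Import monalg.
From mathcomp Require Import ring.
Import GRing.Theory.
Local Open Scope ring_scope.

(* Proof strategy: every element of the free algebra is congruent
   modulo I to a linear combination of Bset; this set of "reducible" elements is
   closed under right multiplication by each letter (checked on Bset elements,
   using explicit ideal-membership certificates verified by a reflexive
   noncommutative-polynomial normaliser). *)

Section Eng.
Variable K : fieldType.
Local Notation A := (freeAlg K).

Lemma malgC_comm (c : K) (x : A) : c%:MP * x = x * c%:MP.
Proof.
rewrite [x]monalgE !(mulr_suml, mulr_sumr); apply: eq_bigr => k _.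
rewrite !malgM_def !fgmulUU mulrC; congr (<< _ *g _ >>).
by rewrite mulm1 mul1m.
Qed.

Lemma scalerAr' (c : K) (x y : A) : x * (c *: y) = c *: (x * y).
Proof. by rewrite -!mul_malgC mulrA -malgC_comm mulrA. Qed.

Section Env.
Variable env : seq A.
Definition lt (i : nat) : A := nth 0 env i.

Inductive tm :=
 | TX of nat | TN of nat | TA of K | TZ of K & tm
 | TAdd of tm & tm | TSub of tm & tm | TMul of tm & tm | TPow of tm & nat | T0 | TOpp of tm.

Fixpoint ev (t : tm) : A :=
  match t with
  | TX i => lt i | TN n => n%:R | TA c => c%:A | TZ c a => c *: ev a
  | TAdd a b => ev a + ev b | TSub a b => ev a - ev b
  | TMul a b => ev a * ev b | TPow a n => ev a ^+ n | T0 => 0 | TOpp a => - ev a end.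

Definition nf := seq (K * seq nat).
Fixpoint wev (w : seq nat) : A := if w is i :: w' then lt i * wev w' else 1.
Definition nfev (p : nf) : A := \sum_(x <- p) x.1 *: wev x.2.

Fixpoint mulmon (x : K * seq nat) (q : nf) : nf :=
  match q with [::] => [::] | y :: q' => (x.1 * y.1, x.2 ++ y.2) :: mulmon x q' end.
Fixpoint nmul (p q : nf) : nf :=
  match p with [::] => [::] | x :: p' => mulmon x q ++ nmul p' q end.
Fixpoint npow (p : nf) (n : nat) : nf :=
  match n with 0 => [:: (1, [::])] | n'.+1 => nmul p (npow p n') end.
Fixpoint nscale (c : K) (p : nf) : nf :=
  match p with [::] => [::] | x :: p' => (c * x.1, x.2) :: nscale c p' end.
Fixpoint norm (t : tm) : nf :=
  match t with
  | TX i => [:: (1, [:: i])] | TN n => [:: (n%:R, [::])] | TA c => [:: (c, [::])]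
  | TZ c a => nscale c (norm a)
  | TAdd a b => norm a ++ norm b | TSub a b => norm a ++ nscale (-1) (norm b)
  | TMul a b => nmul (norm a) (norm b) | TPow a n => npow (norm a) n | T0 => [::]
  | TOpp a => nscale (-1) (norm a) end.

Fixpoint weq (u v : seq nat) : bool :=
  match u, v with
  | [::], [::] => true
  | i :: u', j :: v' => Nat.eqb i j && weq u' v'
  | _, _ => false end.
Fixpoint ins (x : K * seq nat) (p : nf) : nf :=
  match p with
  | [::] => [:: x]
  | y :: p' => if weq x.2 y.2 then (x.1 + y.1, y.2) :: p' else y :: ins x p' end.
Fixpoint collect (p : nf) : nf :=
  match p with [::] => [::] | x :: p' => ins x (collect p') end.
Fixpoint allz (p : nf) : Prop :=
  match p with [::] => True | x :: p' => x.1 = 0 /\ allz p' end.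


Lemma wev_nil : wev [::] = 1. Proof. by []. Qed.
Lemma wev_cons i w : wev (i :: w) = lt i * wev w. Proof. by []. Qed.

Lemma wev_cat u v : wev (u ++ v) = wev u * wev v.
Proof.
elim: u => [|i u IH]; first by rewrite cat0s wev_nil mul1r.
by rewrite cat_cons wev_cons IH wev_cons; apply: mulrA.
Qed.

Lemma weqP u v : weq u v -> u = v.
Proof.
elim: u v => [|i u IH] [|j v] //.
by move=> /andP [/PeanoNat.Nat.eqb_eq -> /IH ->].
Qed.

Lemma nfev_nil : nfev [::] = 0. Proof. by rewrite /nfev big_nil. Qed.
Lemma nfev_cons x p : nfev (x :: p) = x.1 *: wev x.2 + nfev p.
Proof. by rewrite /nfev big_cons. Qed.
Lemma nfev_cat p q : nfev (p ++ q) = nfev p + nfev q.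
Proof. by rewrite /nfev big_cat. Qed.

Lemma nfev_mulmon x q : nfev (mulmon x q) = (x.1 *: wev x.2) * nfev q.
Proof.
elim: q => [|y q IH]; first by rewrite nfev_nil mulr0.
have -> : mulmon x (y :: q) = (x.1 * y.1, x.2 ++ y.2) :: mulmon x q by [].
rewrite nfev_cons nfev_cons IH mulrDr; congr (_ + _).
rewrite -scalerAl scalerAr' scalerA wev_cat; reflexivity.
Qed.

Lemma nfev_nmul p q : nfev (nmul p q) = nfev p * nfev q.
Proof.
elim: p => [|x p IH]; first by rewrite nfev_nil mul0r.
have -> : nmul (x :: p) q = mulmon x q ++ nmul p q by [].
by rewrite nfev_cat nfev_mulmon IH nfev_cons mulrDl.
Qed.

Lemma nfev_nscale c p : nfev (nscale c p) = c *: nfev p.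
Proof.
elim: p => [|x p IH]; first by rewrite nfev_nil scaler0.
have -> : nscale c (x :: p) = (c * x.1, x.2) :: nscale c p by [].
by rewrite nfev_cons nfev_cons IH scalerDr scalerA.
Qed.

Lemma nfev1 (x : K * seq nat) : nfev [:: x] = x.1 *: wev x.2.
Proof. by rewrite nfev_cons nfev_nil addr0. Qed.

Lemma normP t : ev t = nfev (norm t).
Proof.
elim: t => [i|n|c|c a IH|a IHa b IHb|a IHa b IHb|a IHa b IHb|a IH n||a IH].
- by rewrite nfev1 scale1r wev_cons wev_nil mulr1.
- by rewrite nfev1 wev_nil scaler_nat.
- by rewrite nfev1 wev_nil.
- by rewrite [norm _]/= nfev_nscale -IH.
- by rewrite [norm _]/= nfev_cat -IHa -IHb.
- by rewrite [norm _]/= nfev_cat nfev_nscale -IHa -IHb scaleN1r.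
- by rewrite [norm _]/= nfev_nmul -IHa -IHb.
- have -> : ev (TPow a n) = ev a ^+ n by [].
  have -> : norm (TPow a n) = npow (norm a) n by [].
  elim: n => [|n IHn]; first by rewrite expr0 nfev1 scale1r wev_nil.
  have -> : npow (norm a) n.+1 = nmul (norm a) (npow (norm a) n) by [].
  by rewrite nfev_nmul -IHn -IH exprS.
- by rewrite nfev_nil.
- by rewrite [norm _]/= nfev_nscale -IH scaleN1r.
Qed.

Lemma nfev_ins x p : nfev (ins x p) = x.1 *: wev x.2 + nfev p.
Proof.
elim: p => [|y p IH]; first by rewrite nfev1 nfev_nil addr0.
have -> : ins x (y :: p) = if weq x.2 y.2 then (x.1 + y.1, y.2) :: p else y :: ins x p by [].
case E: (weq x.2 y.2); rewrite nfev_cons nfev_cons.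
  by rewrite (weqP _ _ E) scalerDl addrA.
by rewrite IH addrCA.
Qed.

Lemma nfev_collect p : nfev (collect p) = nfev p.
Proof.
elim: p => [|x p IH] //.
have -> : collect (x :: p) = ins x (collect p) by [].
by rewrite nfev_ins IH nfev_cons.
Qed.

Lemma allzP p : allz p -> nfev p = 0.
Proof.
elim: p => [|x p IH]; first by rewrite nfev_nil.
by case=> H /IH; rewrite nfev_cons H scale0r add0r.
Qed.

Lemma eq_by_norm s t : allz (collect (norm s ++ nscale (-1) (norm t))) -> ev s = ev t.
Proof.
move/allzP; rewrite nfev_collect nfev_cat nfev_nscale scaleN1r -!normP.
by move/eqP; rewrite subr_eq0 => /eqP.
Qed.

End Env.

Definition std : seq A := [:: th1 K; th3 K; th4 K; th5 K].

Definition Gsyns : seq tm := [::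
  (TSub (TPow (TX 0%N) 2%N) (TX 0%N));
  (TPow (TX 2%N) 2%N);
  (TMul (TX 2%N) (TX 3%N));
  (TSub (TSub (TSub (TAdd (TMul (TX 2%N) (TX 0%N)) (TMul (TX 2%N) (TX 1%N))) (TMul (TN 2%N) (TX 2%N))) (TMul (TX 3%N) (TX 2%N))) (TPow (TX 3%N) 2%N));
  (TSub (TSub (TSub (TSub (TAdd (TSub (TPow (TX 1%N) 2%N) (TX 1%N)) (TX 3%N)) (TMul (TN 3%N) (TMul (TX 1%N) (TX 2%N)))) (TMul (TX 1%N) (TX 3%N))) (TMul (TX 0%N) (TX 2%N))) (TMul (TX 3%N) (TX 0%N)));
  (TSub (TSub (TAdd (TAdd (TSub (TAdd (TAdd (TSub (TSub (TSub (TMul (TX 1%N) (TX 0%N)) (TX 0%N)) (TX 2%N)) (TMul (TA ((2%:R)^-1)) (TMul (TX 2%N) (TX 0%N)))) (TMul (TA ((2%:R)^-1)) (TMul (TX 2%N) (TX 1%N)))) (TMul (TX 3%N) (TX 0%N))) (TMul (TA ((2%:R)^-1)) (TMul (TX 3%N) (TX 2%N)))) (TMul (TA ((2%:R)^-1)) (TPow (TX 3%N) 2%N))) (TMul (TX 1%N) (TX 2%N))) (TMul (TX 0%N) (TX 3%N))) (TMul (TX 1%N) (TX 3%N)));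
  (TAdd (TAdd (TAdd (TSub (TSub (TAdd (TSub (TAdd (TAdd (TSub (TMul (TX 0%N) (TX 1%N)) (TX 1%N)) (TX 2%N)) (TX 3%N)) (TMul (TA (3%:R / 2%:R)) (TMul (TX 2%N) (TX 0%N)))) (TMul (TA (3%:R / 2%:R)) (TMul (TX 2%N) (TX 1%N)))) (TMul (TN 2%N) (TMul (TX 3%N) (TX 0%N)))) (TMul (TA (3%:R / 2%:R)) (TMul (TX 3%N) (TX 2%N)))) (TMul (TA (3%:R / 2%:R)) (TPow (TX 3%N) 2%N))) (TMul (TN 3%N) (TMul (TX 1%N) (TX 2%N)))) (TMul (TX 1%N) (TX 3%N)));
  (TAdd (TSub (TSub (TAdd (TSub (TMul (TX 3%N) (TX 1%N)) (TMul (TX 2%N) (TX 0%N))) (TMul (TX 2%N) (TX 1%N))) (TMul (TX 3%N) (TX 0%N))) (TMul (TX 3%N) (TX 2%N))) (TPow (TX 3%N) 2%N));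
  (TSub (TSub (TMul (TMul (TX 3%N) (TX 0%N)) (TX 3%N)) (TMul (TPow (TX 3%N) 2%N) (TX 0%N))) (TMul (TX 3%N) (TX 2%N)));
  (TAdd (TAdd (TSub (TMul (TMul (TX 3%N) (TX 2%N)) (TX 0%N)) (TPow (TX 3%N) 3%N)) (TMul (TMul (TX 3%N) (TX 0%N)) (TX 2%N))) (TMul (TPow (TX 3%N) 2%N) (TX 0%N)));
  (TSub (TAdd (TAdd (TMul (TMul (TX 2%N) (TX 0%N)) (TX 3%N)) (TMul (TPow (TX 3%N) 2%N) (TX 0%N))) (TMul (TX 3%N) (TX 2%N))) (TPow (TX 3%N) 3%N));
  (TAdd (TMul (TMul (TX 3%N) (TX 1%N)) (TX 2%N)) (TMul (TMul (TX 3%N) (TX 0%N)) (TX 2%N)));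
  (TAdd (TAdd (TSub (TSub (TMul (TMul (TX 1%N) (TX 3%N)) (TX 0%N)) (TMul (TX 0%N) (TX 3%N))) (TMul (TX 1%N) (TX 3%N))) (TMul (TX 1%N) (TX 2%N))) (TPow (TX 3%N) 2%N));
  (TSub (TAdd (TMul (TMul (TX 2%N) (TX 0%N)) (TX 3%N)) (TMul (TMul (TX 2%N) (TX 1%N)) (TX 3%N))) (TPow (TX 3%N) 3%N));
  (TSub (TMul (TMul (TX 2%N) (TX 1%N)) (TX 3%N)) (TMul (TMul (TX 3%N) (TX 0%N)) (TX 3%N)));
  (TSub (TSub (TSub (TAdd (TSub (TAdd (TAdd (TMul (TMul (TX 0%N) (TX 3%N)) (TX 0%N)) (TMul (TX 0%N) (TX 3%N))) (TMul (TX 1%N) (TX 3%N))) (TPow (TX 3%N) 2%N)) (TMul (TX 0%N) (TX 2%N))) (TMul (TPow (TX 3%N) 2%N) (TX 0%N))) (TMul (TX 3%N) (TX 2%N))) (TMul (TX 1%N) (TPow (TX 3%N) 2%N)));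
  (TAdd (TAdd (TAdd (TAdd (TSub (TAdd (TAdd (TSub (TSub (TSub (TMul (TMul (TX 0%N) (TX 3%N)) (TX 1%N)) (TMul (TN 2%N) (TMul (TX 1%N) (TX 2%N)))) (TMul (TX 0%N) (TX 3%N))) (TMul (TX 1%N) (TX 3%N))) (TPow (TX 3%N) 2%N)) (TMul (TN 3%N) (TMul (TX 3%N) (TX 2%N)))) (TMul (TX 0%N) (TX 2%N))) (TMul (TPow (TX 3%N) 2%N) (TX 0%N))) (TMul (TX 1%N) (TPow (TX 3%N) 2%N))) (TMul (TN 2%N) (TMul (TMul (TX 3%N) (TX 0%N)) (TX 2%N)))) (TMul (TN 2%N) (TMul (TMul (TX 1%N) (TX 3%N)) (TX 2%N))));
  (TSub (TSub (TSub (TAdd (TAdd (TAdd (TMul (TMul (TX 1%N) (TX 2%N)) (TX 0%N)) (TMul (TX 0%N) (TX 2%N))) (TMul (TX 0%N) (TX 3%N))) (TMul (TX 1%N) (TX 3%N))) (TMul (TX 3%N) (TX 2%N))) (TMul (TX 1%N) (TPow (TX 3%N) 2%N))) (TPow (TX 3%N) 2%N))].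

Lemma Igens_ev : Igens K = map (ev std) Gsyns.
Proof. reflexivity. Qed.

End Eng.

Section Eng1.
Variable K : fieldType.
Local Notation A := (freeAlg K).
Local Notation tm := (tm K).
Local Notation ev := (ev K (std K)).
Local Notation Gsyns := (Gsyns K).
Local Notation T0 := (T0 K).
Local Notation TMul := (TMul K).
Local Notation TAdd := (TAdd K).
Notation J := (@inI K).

Lemma J0 : J 0.
Proof. by exists [::]; split => //; rewrite big_nil. Qed.

Lemma JD f g : J f -> J g -> J (f + g).
Proof.
move=> [s [Hs ->]] [t [Ht ->]]; exists (s ++ t); split; last by rewrite big_cat.
by move=> x; rewrite mem_cat => /orP [/Hs|/Ht].
Qed.

Lemma JLR a b f : J f -> J (a * f * b).
Proof.
move=> [s [Hs ->]]; exists [seq (a * t.1.1, t.1.2, t.2 * b) | t <- s]; split.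
  by move=> x /mapP [y /Hs Hy ->].
rewrite big_map mulr_sumr mulr_suml; apply: eq_bigr => t _.
cbn [fst snd]; rewrite mulrA mulrA; symmetry; apply: mulrA.
Qed.

Lemma JZ c f : J f -> J (c *: f).
Proof.
move=> H; rewrite -mul_malgC -[_ * f]mulr1; exact: JLR.
Qed.

Lemma JN f : J f -> J (- f).
Proof. by move=> H; rewrite -scaleN1r; apply: JZ. Qed.

Lemma JB f g : J f -> J g -> J (f - g).
Proof. by move=> Hf Hg; apply: JD => //; apply: JN. Qed.

Lemma Jg g : g \in Igens K -> J g.
Proof.
move=> H; exists [:: (1, g, 1)]; split; first by move=> t; rewrite inE => /eqP ->.
by rewrite big_cons big_nil addr0 mul1r mulr1.
Qed.

Definition cterm (c : tm * nat * tm) := TMul (TMul c.1.1 (nth T0 Gsyns c.1.2)) c.2.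
Fixpoint csum (l : seq (tm * nat * tm)) : tm :=
  match l with [::] => T0 | c :: l => TAdd (cterm c) (csum l) end.

Lemma csum_ok l : all (fun c => c.1.2 < 18)%N l -> J (ev (csum l)).
Proof.
elim: l => [|c l IH]; first by move=> _; exact: J0.
move=> /andP [Hc /IH Hl].
have -> : ev (csum (c :: l)) = ev c.1.1 * ev (nth T0 Gsyns c.1.2) * ev c.2 + ev (csum l) by [].
apply: JD => //; apply: JLR; apply: Jg.
have -> : ev (nth T0 Gsyns c.1.2) = nth 0 (Igens K) c.1.2.
  by rewrite Igens_ev (nth_map T0).
by apply: mem_nth.
Qed.

Lemma cert_ok T l : all (fun c => c.1.2 < 18)%N l -> ev T = ev (csum l) -> J (ev T).
Proof. by move=> H ->; apply: csum_ok. Qed.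

Lemma cert_via e T l : ev T = e -> all (fun c => c.1.2 < 18)%N l -> ev T = ev (csum l) -> J e.
Proof. move=> He H1 H2; rewrite -He; exact: (cert_ok T l H1 H2). Qed.
End Eng1.
Ltac splitz := lazymatch goal with |- _ /\ _ => split; [ | splitz ] | |- True => exact I | _ => idtac end.



Section Main.
Variable K : fieldType.
Hypothesis charK0 : [pchar K] =i pred0.
Local Notation A := (freeAlg K).
Local Notation x1 := (th1 K).
Local Notation x3 := (th3 K).
Local Notation x4 := (th4 K).
Local Notation x5 := (th5 K).
Local Notation J := (@inI K).
Arguments TX {K}. Arguments TN {K}. Arguments TA {K}. Arguments TZ {K}. Arguments TAdd {K}.
Arguments TSub {K}. Arguments TMul {K}. Arguments TPow {K}. Arguments T0 {K}. Arguments TOpp {K}.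

Arguments J0 {K}. Arguments JD {K} f g. Arguments JLR {K} a b f. Arguments JZ {K} c f.
Arguments JN {K} f. Arguments JB {K} f g. Arguments Jg {K} g. Arguments scalerAr' {K} c x y.
Arguments eq_by_norm {K} env s t.

Lemma natK_neq0 n : (n.+1%:R : K) != 0.
Proof. by rewrite ((pcharf0P K).1 charK0). Qed.

Ltac solve_norm := apply: eq_by_norm;
  cbv beta iota zeta delta [collect ins weq Nat.eqb andb norm nmul mulmon npow nscale cat allz fst snd csum cterm seq.nth Gsyns];
  splitz; field; try done; try (repeat (apply/andP; split); apply: natK_neq0).

Definition Sc (S : A -> Prop) (f : A) := exists s : seq (K * A),
  (forall t, t \in s -> S t.2) /\ J (f - \sum_(t <- s) t.1 *: t.2).

Lemma JLw a f g : J (f - g) -> J (a * f - a * g).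
Proof. by move=> H; rewrite -mulrBr -[_ * (f - g)]mulr1; apply: JLR. Qed.

Lemma JRw a f g : J (f - g) -> J (f * a - g * a).
Proof. by move=> H; rewrite -mulrBl -[f - g]mul1r; apply: JLR. Qed.

Section ScTh.
Variable S : A -> Prop.

Lemma Sc0 : Sc S 0.
Proof. by exists [::]; split => //; rewrite big_nil subr0; exact: J0. Qed.

Lemma ScB b : S b -> Sc S b.
Proof.
move=> Hb; exists [:: (1, b)]; split; first by move=> t; rewrite inE => /eqP ->.
by rewrite big_cons big_nil addr0 scale1r subrr; exact: J0.
Qed.

Lemma ScJ f g : J (f - g) -> Sc S g -> Sc S f.
Proof.
move=> Hfg [s [Hs Hg]]; exists s; split => //.
have -> : f - \sum_(t <- s) t.1 *: t.2 = (f - g) + (g - \sum_(t <- s) t.1 *: t.2).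
  by rewrite addrA subrK.
exact: JD.
Qed.

Lemma ScJ0 f : J f -> Sc S f.
Proof. by move=> H; apply: (ScJ f 0); [rewrite subr0 | exact: Sc0]. Qed.

Lemma ScD f g : Sc S f -> Sc S g -> Sc S (f + g).
Proof.
move=> [s [Hs Hf]] [t [Ht Hg]]; exists (s ++ t); split.
  by move=> x; rewrite mem_cat => /orP [/Hs|/Ht].
rewrite big_cat.
have -> : f + g - (\sum_(x <- s) x.1 *: x.2 + \sum_(x <- t) x.1 *: x.2) =
  (f - \sum_(x <- s) x.1 *: x.2) + (g - \sum_(x <- t) x.1 *: x.2).
  by rewrite opprD addrACA.
exact: JD.
Qed.

Lemma ScZ c f : Sc S f -> Sc S (c *: f).
Proof.
move=> [s [Hs Hf]]; exists [seq (c * t.1, t.2) | t <- s]; split.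
  by move=> x /mapP [y /Hs Hy ->].
have -> : \sum_(t <- [seq (c * t.1, t.2) | t <- s]) t.1 *: t.2 =
          c *: \sum_(t <- s) t.1 *: t.2.
  rewrite big_map scaler_sumr; apply: eq_bigr => t _; symmetry; exact: scalerA.
by rewrite -scalerBr; apply: JZ.
Qed.

Lemma ScN f : Sc S f -> Sc S (- f).
Proof. by move=> H; rewrite -scaleN1r; apply: ScZ. Qed.

Lemma ScBs f g : Sc S f -> Sc S g -> Sc S (f - g).
Proof. by move=> Hf Hg; apply: ScD => //; apply: ScN. Qed.

Lemma Sc_sum (s : seq (K * A)) (F : A -> A) :
  (forall t, t \in s -> Sc S (F t.2)) -> Sc S (\sum_(t <- s) t.1 *: F t.2).
Proof.
elim: s => [|x s IH] H; first by rewrite big_nil; exact: Sc0.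
rewrite big_cons; apply: ScD; first by apply: ScZ; apply: H; rewrite inE eqxx.
by apply: IH => t Ht; apply: H; rewrite inE Ht orbT.
Qed.

End ScTh.

Lemma ScS (S S' : A -> Prop) f : (forall b, S b -> Sc S' b) -> Sc S f -> Sc S' f.
Proof.
move=> HS [s [Hs Hf]]; apply: (ScJ _ _ _ Hf).
have := Sc_sum S' s id; apply => t /Hs; exact: HS.
Qed.

Lemma Sc_mulr (S : A -> Prop) x f : (forall b, S b -> Sc S (b * x)) -> Sc S f -> Sc S (f * x).
Proof.
move=> HS [s [Hs Hf]].
apply: (ScJ _ _ (\sum_(t <- s) t.1 *: (t.2 * x))).
  have -> : \sum_(t <- s) t.1 *: (t.2 * x) = (\sum_(t <- s) t.1 *: t.2) * x.
    rewrite mulr_suml; apply: eq_bigr => t _; exact: scalerAl.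
  exact: JRw.
have := Sc_sum S s (fun b => b * x); apply => t /Hs; exact: HS.
Qed.

Lemma Sc_mull (S : A -> Prop) x f : (forall b, S b -> Sc S (x * b)) -> Sc S f -> Sc S (x * f).
Proof.
move=> HS [s [Hs Hf]].
apply: (ScJ _ _ (\sum_(t <- s) t.1 *: (x * t.2))).
  have -> : \sum_(t <- s) t.1 *: (x * t.2) = x * (\sum_(t <- s) t.1 *: t.2).
    rewrite mulr_sumr; apply: eq_bigr => t _; by rewrite scalerAr'.
  exact: JLw.
have := Sc_sum S s (fun b => x * b); apply => t /Hs; exact: HS.
Qed.

Ltac rlin := repeat match goal with
  | |- Sc _ (_ + _) => apply: ScD
  | |- Sc _ (- _) => apply: ScN
  | |- Sc _ (_ *: _) => apply: ScZ
  | |- Sc _ 0 => apply: Sc0 end.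

Lemma F45 : J (x4 * x5).
Proof. apply: (@cert_via K _ ((TMul (TX 2%N) (TX 3%N))) [:: (TZ 1%:R (TN 1%N), 2%N, (TN 1%N))]); [reflexivity | by [] | solve_norm]. Qed.

Lemma F44 : J (x4 * x4).
Proof. apply: (@cert_via K _ ((TMul (TX 2%N) (TX 2%N))) [:: (TZ 1%:R (TN 1%N), 1%N, (TN 1%N))]); [reflexivity | by [] | solve_norm]. Qed.

Lemma F515 : J (x5 * x1 * x5 - (x5 ^+ 2 * x1 + x5 * x4)).
Proof. apply: (@cert_via K _ ((TSub (TMul (TMul (TX 3%N) (TX 0%N)) (TX 3%N)) (TAdd (TMul (TPow (TX 3%N) 2%N) (TX 0%N)) (TMul (TX 3%N) (TX 2%N))))) [:: (TZ 1%:R (TN 1%N), 8%N, (TN 1%N))]); [reflexivity | by [] | solve_norm]. Qed.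

Lemma F415 : J (x4 * x1 * x5 - (0 - x5 ^+ 2 * x1 + x5 ^+ 3 - x5 * x4)).
Proof. apply: (@cert_via K _ ((TSub (TMul (TMul (TX 2%N) (TX 0%N)) (TX 3%N)) (TSub (TAdd (TSub T0 (TMul (TPow (TX 3%N) 2%N) (TX 0%N))) (TPow (TX 3%N) 3%N)) (TMul (TX 3%N) (TX 2%N))))) [:: (TZ 1%:R (TN 1%N), 10%N, (TN 1%N))]); [reflexivity | by [] | solve_norm]. Qed.

Lemma F414 : J (x4 * x1 * x4 - (0 - x5 * x1 * x4 + x5 ^+ 2 * x4)).
Proof. apply: (@cert_via K _ ((TSub (TMul (TMul (TX 2%N) (TX 0%N)) (TX 2%N)) (TAdd (TSub T0 (TMul (TMul (TX 3%N) (TX 0%N)) (TX 2%N))) (TMul (TPow (TX 3%N) 2%N) (TX 2%N))))) [:: (TZ 1%:R (TN 1%N), 3%N, (TX 2%N));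
    (TZ 1%:R (TX 3%N), 1%N, (TN 1%N));
    (TZ 1%:R (TN 1%N), 9%N, (TN 1%N));
    (TZ (- 1%:R) (TN 1%N), 13%N, (TN 1%N));
    (TZ 1%:R (TN 1%N), 3%N, (TX 0%N));
    (TZ 1%:R (TN 1%N), 1%N, (TX 1%N));
    (TZ (- 1%:R) (TN 1%N), 2%N, (TX 2%N));
    (TZ (- (1%:R / 2%:R)) (TX 2%N), 3%N, (TN 1%N));
    (TZ (- 1%:R) (TX 2%N), 5%N, (TN 1%N));
    (TZ 1%:R (TN 1%N), 2%N, (TX 0%N));
    (TZ (- 1%:R) (TX 2%N), 0%N, (TN 1%N))]); [reflexivity | by [] | solve_norm]. Qed.

Lemma F11 : J (x1 * x1 - (x1)).
Proof. apply: (@cert_via K _ ((TSub (TMul (TX 0%N) (TX 0%N)) (TX 0%N))) [:: (TZ 1%:R (TN 1%N), 0%N, (TN 1%N))]); [reflexivity | by [] | solve_norm]. Qed.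

Lemma F541 : J (x5 * x4 * x1 - (0 - x5 * x1 * x4 - x5 ^+ 2 * x1 + x5 ^+ 3)).
Proof. apply: (@cert_via K _ ((TSub (TMul (TMul (TX 3%N) (TX 2%N)) (TX 0%N)) (TAdd (TSub (TSub T0 (TMul (TMul (TX 3%N) (TX 0%N)) (TX 2%N))) (TMul (TPow (TX 3%N) 2%N) (TX 0%N))) (TPow (TX 3%N) 3%N)))) [:: (TZ 1%:R (TN 1%N), 9%N, (TN 1%N))]); [reflexivity | by [] | solve_norm]. Qed.

Lemma F141 : J (x1 * x4 * x1 - (x1 * x5 ^+ 2 - x3 * x5 * x4 - x3 * x5 ^+ 2 - x5 * x1 * x4 - x5 ^+ 2 * x1 + 2%:R *: (x1 * x4) + x1 * x5 + x3 * x4 + x3 * x5 - 2%:R *: (x5 * x4) - x5 ^+ 2)).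
Proof. apply: (@cert_via K _ ((TSub (TMul (TMul (TX 0%N) (TX 2%N)) (TX 0%N)) (TSub (TSub (TAdd (TAdd (TAdd (TAdd (TSub (TSub (TSub (TSub (TMul (TX 0%N) (TPow (TX 3%N) 2%N)) (TMul (TMul (TX 1%N) (TX 3%N)) (TX 2%N))) (TMul (TX 1%N) (TPow (TX 3%N) 2%N))) (TMul (TMul (TX 3%N) (TX 0%N)) (TX 2%N))) (TMul (TPow (TX 3%N) 2%N) (TX 0%N))) (TZ 2%:R (TMul (TX 0%N) (TX 2%N)))) (TMul (TX 0%N) (TX 3%N))) (TMul (TX 1%N) (TX 2%N))) (TMul (TX 1%N) (TX 3%N))) (TZ 2%:R (TMul (TX 3%N) (TX 2%N)))) (TPow (TX 3%N) 2%N)))) [:: (TZ (- (1%:R / 2%:R)) (TN 1%N), 15%N, (TN 1%N));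
    (TZ (1%:R / 2%:R) (TN 1%N), 16%N, (TN 1%N));
    (TZ (1%:R / 2%:R) (TX 0%N), 3%N, (TN 1%N));
    (TZ (- (1%:R / 2%:R)) (TX 0%N), 7%N, (TN 1%N))]); [reflexivity | by [] | solve_norm]. Qed.

Lemma F5141 : J (x5 * x1 * x4 * x1 - (x5 ^+ 3 * x1 + x5 * x1 * x4 - x5 ^+ 3)).
Proof. apply: (@cert_via K _ ((TSub (TMul (TMul (TMul (TX 3%N) (TX 0%N)) (TX 2%N)) (TX 0%N)) (TSub (TAdd (TMul (TPow (TX 3%N) 3%N) (TX 0%N)) (TMul (TMul (TX 3%N) (TX 0%N)) (TX 2%N))) (TPow (TX 3%N) 3%N)))) [:: (TZ 1%:R (TN 1%N), 9%N, (TX 0%N));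
    (TZ (- 1%:R) (TMul (TX 3%N) (TX 3%N)), 0%N, (TN 1%N));
    (TZ (- 1%:R) (TMul (TX 3%N) (TX 2%N)), 0%N, (TN 1%N));
    (TZ (- 1%:R) (TN 1%N), 9%N, (TN 1%N))]); [reflexivity | by [] | solve_norm]. Qed.

Lemma F31 : J (x3 * x1 - (x1 * x5 - x3 * x4 + x3 * x5 + x4 * x1 - x5 * x1 - x5 ^+ 2 + x1)).
Proof. apply: (@cert_via K _ ((TSub (TMul (TX 1%N) (TX 0%N)) (TAdd (TSub (TSub (TAdd (TAdd (TSub (TMul (TX 0%N) (TX 3%N)) (TMul (TX 1%N) (TX 2%N))) (TMul (TX 1%N) (TX 3%N))) (TMul (TX 2%N) (TX 0%N))) (TMul (TX 3%N) (TX 0%N))) (TPow (TX 3%N) 2%N)) (TX 0%N)))) [:: (TZ 1%:R (TN 1%N), 5%N, (TN 1%N));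
    (TZ (- (1%:R / 2%:R)) (TN 1%N), 3%N, (TN 1%N))]); [reflexivity | by [] | solve_norm]. Qed.

Lemma F351 : J (x3 * x5 * x1 - (x1 * x5 - x3 * x4 + x3 * x5 - x5 ^+ 2)).
Proof. apply: (@cert_via K _ ((TSub (TMul (TMul (TX 1%N) (TX 3%N)) (TX 0%N)) (TSub (TAdd (TSub (TMul (TX 0%N) (TX 3%N)) (TMul (TX 1%N) (TX 2%N))) (TMul (TX 1%N) (TX 3%N))) (TPow (TX 3%N) 2%N)))) [:: (TZ 1%:R (TN 1%N), 12%N, (TN 1%N))]); [reflexivity | by [] | solve_norm]. Qed.

Lemma F151 : J (x1 * x5 * x1 - (x3 * x5 ^+ 2 + x5 ^+ 2 * x1 - x1 * x4 - x1 * x5 - x3 * x5 + x5 * x4 + x5 ^+ 2)).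
Proof. apply: (@cert_via K _ ((TSub (TMul (TMul (TX 0%N) (TX 3%N)) (TX 0%N)) (TAdd (TAdd (TSub (TSub (TSub (TAdd (TMul (TX 1%N) (TPow (TX 3%N) 2%N)) (TMul (TPow (TX 3%N) 2%N) (TX 0%N))) (TMul (TX 0%N) (TX 2%N))) (TMul (TX 0%N) (TX 3%N))) (TMul (TX 1%N) (TX 3%N))) (TMul (TX 3%N) (TX 2%N))) (TPow (TX 3%N) 2%N)))) [:: (TZ 1%:R (TN 1%N), 15%N, (TN 1%N))]); [reflexivity | by [] | solve_norm]. Qed.

Lemma F341 : J (x3 * x4 * x1 - (x3 * x5 ^+ 2 - x1 * x4 - x1 * x5 - x3 * x5 + x5 * x4 + x5 ^+ 2)).
Proof. apply: (@cert_via K _ ((TSub (TMul (TMul (TX 1%N) (TX 2%N)) (TX 0%N)) (TAdd (TAdd (TSub (TSub (TSub (TMul (TX 1%N) (TPow (TX 3%N) 2%N)) (TMul (TX 0%N) (TX 2%N))) (TMul (TX 0%N) (TX 3%N))) (TMul (TX 1%N) (TX 3%N))) (TMul (TX 3%N) (TX 2%N))) (TPow (TX 3%N) 2%N)))) [:: (TZ 1%:R (TN 1%N), 17%N, (TN 1%N))]); [reflexivity | by [] | solve_norm]. Qed.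

Lemma F53 : J (x5 * x3 - (2%:R *: (x4 * x1) + x5 * x1 - 2%:R *: (x5 ^+ 2) - 2%:R *: x4)).
Proof. apply: (@cert_via K _ ((TSub (TMul (TX 3%N) (TX 1%N)) (TSub (TSub (TAdd (TZ 2%:R (TMul (TX 2%N) (TX 0%N))) (TMul (TX 3%N) (TX 0%N))) (TZ 2%:R (TPow (TX 3%N) 2%N))) (TZ 2%:R (TX 2%N))))) [:: (TZ (- 1%:R) (TN 1%N), 3%N, (TN 1%N));
    (TZ 1%:R (TN 1%N), 7%N, (TN 1%N))]); [reflexivity | by [] | solve_norm]. Qed.

Lemma F43 : J (x4 * x3 - (0 - x4 * x1 + x5 * x4 + x5 ^+ 2 + 2%:R *: x4)).
Proof. apply: (@cert_via K _ ((TSub (TMul (TX 2%N) (TX 1%N)) (TAdd (TAdd (TAdd (TSub T0 (TMul (TX 2%N) (TX 0%N))) (TMul (TX 3%N) (TX 2%N))) (TPow (TX 3%N) 2%N)) (TZ 2%:R (TX 2%N))))) [:: (TZ 1%:R (TN 1%N), 3%N, (TN 1%N))]); [reflexivity | by [] | solve_norm]. Qed.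

Lemma F5143 : J (x5 * x1 * x4 * x3 - (x5 ^+ 2 * x1 * x4 + x5 * x1 * x4 + x5 ^+ 2 * x4 + x5 ^+ 3)).
Proof. apply: (@cert_via K _ ((TSub (TMul (TMul (TMul (TX 3%N) (TX 0%N)) (TX 2%N)) (TX 1%N)) (TAdd (TAdd (TAdd (TMul (TMul (TPow (TX 3%N) 2%N) (TX 0%N)) (TX 2%N)) (TMul (TMul (TX 3%N) (TX 0%N)) (TX 2%N))) (TMul (TPow (TX 3%N) 2%N) (TX 2%N))) (TPow (TX 3%N) 3%N)))) [:: (TZ (- 1%:R) (TN 1%N), 14%N, (TX 3%N));
    (TZ 1%:R (TMul (TX 3%N) (TX 0%N)), 3%N, (TN 1%N));
    (TZ (- 1%:R) (TN 1%N), 14%N, (TX 2%N));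
    (TZ (- 1%:R) (TX 3%N), 10%N, (TN 1%N));
    (TZ 1%:R (TN 1%N), 13%N, (TX 3%N));
    (TZ (- 1%:R) (TX 3%N), 15%N, (TN 1%N));
    (TZ (- 1%:R) (TN 1%N), 10%N, (TX 3%N));
    (TZ (- 1%:R) (TX 3%N), 14%N, (TN 1%N));
    (TZ 1%:R (TX 3%N), 13%N, (TN 1%N));
    (TZ 1%:R (TX 3%N), 17%N, (TN 1%N));
    (TZ (- 1%:R) (TN 1%N), 11%N, (TX 0%N));
    (TZ (- 1%:R) (TN 1%N), 14%N, (TX 0%N));
    (TZ (- 1%:R) (TN 1%N), 10%N, (TX 2%N));
    (TZ 1%:R (TN 1%N), 13%N, (TX 2%N));
    (TZ 1%:R (TX 2%N), 12%N, (TN 1%N));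
    (TZ 1%:R (TX 3%N), 2%N, (TN 1%N));
    (TZ 1%:R (TX 3%N), 1%N, (TN 1%N));
    (TZ (- 1%:R) (TX 2%N), 5%N, (TN 1%N));
    (TZ (1%:R / 2%:R) (TX 2%N), 3%N, (TN 1%N));
    (TZ 1%:R (TN 1%N), 2%N, (TX 0%N));
    (TZ (- 1%:R) (TN 1%N), 1%N, (TX 0%N));
    (TZ 1%:R (TN 1%N), 9%N, (TN 1%N));
    (TZ 1%:R (TN 1%N), 3%N, (TX 0%N));
    (TZ (- 1%:R) (TX 2%N), 0%N, (TN 1%N))]); [reflexivity | by [] | solve_norm]. Qed.

Lemma F143 : J (x1 * x4 * x3 - (x1 * x5 * x4 + x3 * x5 * x4 + x3 * x5 ^+ 2 + x5 * x1 * x4 + x5 ^+ 2 * x1 - x1 * x5 - x3 * x4 - x3 * x5 + 2%:R *: (x5 * x4) + x5 ^+ 2)).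
Proof. apply: (@cert_via K _ ((TSub (TMul (TMul (TX 0%N) (TX 2%N)) (TX 1%N)) (TAdd (TAdd (TSub (TSub (TSub (TAdd (TAdd (TAdd (TAdd (TMul (TMul (TX 0%N) (TX 3%N)) (TX 2%N)) (TMul (TMul (TX 1%N) (TX 3%N)) (TX 2%N))) (TMul (TX 1%N) (TPow (TX 3%N) 2%N))) (TMul (TMul (TX 3%N) (TX 0%N)) (TX 2%N))) (TMul (TPow (TX 3%N) 2%N) (TX 0%N))) (TMul (TX 0%N) (TX 3%N))) (TMul (TX 1%N) (TX 2%N))) (TMul (TX 1%N) (TX 3%N))) (TZ 2%:R (TMul (TX 3%N) (TX 2%N)))) (TPow (TX 3%N) 2%N)))) [:: (TZ (1%:R / 2%:R) (TX 0%N), 3%N, (TN 1%N));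
    (TZ (1%:R / 2%:R) (TN 1%N), 15%N, (TN 1%N));
    (TZ (- (1%:R / 2%:R)) (TN 1%N), 16%N, (TN 1%N));
    (TZ (1%:R / 2%:R) (TX 0%N), 7%N, (TN 1%N))]); [reflexivity | by [] | solve_norm]. Qed.

Lemma F513 : J (x5 * x1 * x3 - (2%:R *: (x4 * x1) + x5 * x1 - 3%:R *: (x5 * x4) - 3%:R *: (x5 ^+ 2) - 2%:R *: x4)).
Proof. apply: (@cert_via K _ ((TSub (TMul (TMul (TX 3%N) (TX 0%N)) (TX 1%N)) (TSub (TSub (TSub (TAdd (TZ 2%:R (TMul (TX 2%N) (TX 0%N))) (TMul (TX 3%N) (TX 0%N))) (TZ 3%:R (TMul (TX 3%N) (TX 2%N)))) (TZ 3%:R (TPow (TX 3%N) 2%N))) (TZ 2%:R (TX 2%N))))) [:: (TZ (- 1%:R) (TN 1%N), 8%N, (TN 1%N));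
    (TZ (- 1%:R) (TN 1%N), 7%N, (TX 3%N));
    (TZ 1%:R (TN 1%N), 3%N, (TX 3%N));
    (TZ (- 2%:R) (TN 1%N), 10%N, (TN 1%N));
    (TZ 3%:R (TN 1%N), 9%N, (TN 1%N));
    (TZ (- (3%:R / 2%:R)) (TX 3%N), 3%N, (TN 1%N));
    (TZ 1%:R (TX 3%N), 6%N, (TN 1%N));
    (TZ (- 3%:R) (TN 1%N), 11%N, (TN 1%N));
    (TZ 1%:R (TN 1%N), 7%N, (TN 1%N));
    (TZ (- 1%:R) (TN 1%N), 3%N, (TN 1%N));
    (TZ 2%:R (TN 1%N), 2%N, (TN 1%N))]); [reflexivity | by [] | solve_norm]. Qed.

Lemma F13 : J (x1 * x3 - (0 - 3%:R *: (x3 * x4) - x3 * x5 + 3%:R *: (x4 * x1) + 2%:R *: (x5 * x1) - 3%:R *: (x5 ^+ 2) + x3 - 4%:R *: x4 - x5)).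
Proof. apply: (@cert_via K _ ((TSub (TMul (TX 0%N) (TX 1%N)) (TSub (TSub (TAdd (TSub (TAdd (TAdd (TSub (TSub T0 (TZ 3%:R (TMul (TX 1%N) (TX 2%N)))) (TMul (TX 1%N) (TX 3%N))) (TZ 3%:R (TMul (TX 2%N) (TX 0%N)))) (TZ 2%:R (TMul (TX 3%N) (TX 0%N)))) (TZ 3%:R (TPow (TX 3%N) 2%N))) (TX 1%N)) (TZ 4%:R (TX 2%N))) (TX 3%N)))) [:: (TZ 1%:R (TN 1%N), 6%N, (TN 1%N));
    (TZ (- (3%:R / 2%:R)) (TN 1%N), 3%N, (TN 1%N))]); [reflexivity | by [] | solve_norm]. Qed.

Lemma F413 : J (x4 * x1 * x3 - (0 - 3%:R *: (x5 * x1 * x4) - x5 ^+ 2 * x1 - x4 * x1 + x5 ^+ 2 + 2%:R *: x4)).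
Proof. apply: (@cert_via K _ ((TSub (TMul (TMul (TX 2%N) (TX 0%N)) (TX 1%N)) (TAdd (TAdd (TSub (TSub (TSub T0 (TZ 3%:R (TMul (TMul (TX 3%N) (TX 0%N)) (TX 2%N)))) (TMul (TPow (TX 3%N) 2%N) (TX 0%N))) (TMul (TX 2%N) (TX 0%N))) (TPow (TX 3%N) 2%N)) (TZ 2%:R (TX 2%N))))) [:: (TZ (1%:R / 2%:R) (TX 3%N), 4%N, (TN 1%N));
    (TZ (1%:R / 2%:R) (TN 1%N), 3%N, (TX 1%N));
    (TZ (- (1%:R / 2%:R)) (TN 1%N), 7%N, (TX 1%N));
    (TZ (- (1%:R / 2%:R)) (TX 3%N), 6%N, (TN 1%N));
    (TZ 1%:R (TX 3%N), 7%N, (TN 1%N));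
    (TZ (1%:R / 2%:R) (TN 1%N), 9%N, (TN 1%N));
    (TZ (- (1%:R / 4%:R)) (TX 3%N), 3%N, (TN 1%N));
    (TZ 1%:R (TN 1%N), 8%N, (TN 1%N));
    (TZ 2%:R (TN 1%N), 10%N, (TN 1%N));
    (TZ 1%:R (TN 1%N), 7%N, (TX 3%N));
    (TZ (- 1%:R) (TN 1%N), 3%N, (TX 3%N));
    (TZ 3%:R (TN 1%N), 11%N, (TN 1%N));
    (TZ (- 2%:R) (TN 1%N), 2%N, (TN 1%N));
    (TZ 1%:R (TN 1%N), 3%N, (TN 1%N))]); [reflexivity | by [] | solve_norm]. Qed.

Lemma F33 : J (x3 * x3 - (x1 * x4 + 3%:R *: (x3 * x4) + x3 * x5 + x5 * x1 + x3 - x5)).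
Proof. apply: (@cert_via K _ ((TSub (TMul (TX 1%N) (TX 1%N)) (TSub (TAdd (TAdd (TAdd (TAdd (TMul (TX 0%N) (TX 2%N)) (TZ 3%:R (TMul (TX 1%N) (TX 2%N)))) (TMul (TX 1%N) (TX 3%N))) (TMul (TX 3%N) (TX 0%N))) (TX 1%N)) (TX 3%N)))) [:: (TZ 1%:R (TN 1%N), 4%N, (TN 1%N))]); [reflexivity | by [] | solve_norm]. Qed.

Ltac ridx x env := lazymatch env with
 | x :: _ => constr:(0%N)
 | _ :: ?e => let i := ridx x e in constr:(i.+1)
 end.

Ltac reify env t :=
  match constr:(tt) with
  | _ => let i := ridx t env in constr:(@TX K i)
  | _ => lazymatch t with
     | ?a - ?b => let ra := reify env a in let rb := reify env b in constr:(@TSub K ra rb)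
     | ?a + ?b => let ra := reify env a in let rb := reify env b in constr:(@TAdd K ra rb)
     | - ?a => let ra := reify env a in constr:(@TOpp K ra)
     | ?a * ?b => let ra := reify env a in let rb := reify env b in constr:(@TMul K ra rb)
     | ?c *: ?a => let ra := reify env a in constr:(@TZ K c ra)
     | ?a ^+ ?n => let ra := reify env a in constr:(@TPow K ra n)
     | 0 => constr:(@T0 K)
     | 1 => constr:(@TN K 1%N)
     end
  end.

Ltac nc_eq env := lazymatch goal with |- ?l = ?r =>
  let tl := reify env l in let tr := reify env r in
  apply: (@eq_by_norm K env tl tr);
  cbv beta iota zeta delta [collect ins weq Nat.eqb andb norm nmul mulmon npow nscale cat allz fst snd];
  splitz; field; try done; try (repeat (apply/andP; split); apply: natK_neq0) end.

Lemma test_nc (y p : A) : y * p * x5 * x1 - 2%:R *: (y * (p * x4)) = y * (p * (x5 * x1)) - (y * p * x4 + y * p * x4).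
Proof. nc_eq [:: x1; x3; x4; x5; y; p]. Qed.

Local Notation Rp := (Sc (@Bset K)).
Definition Pset (b : A) := b = x4 * x1 \/ (exists n, b = x5 ^+ n) \/ (exists n, b = x5 ^+ n * x4)
  \/ (exists n, b = x5 ^+ n * x1 * x4) \/ (exists n, b = x5 ^+ n * x1).
Local Notation Pc := (Sc Pset).

Lemma rB41 : Rp (x4 * x1). Proof. by apply: ScB; left. Qed.
Lemma rB3 : Rp x3. Proof. by apply: ScB; right; left. Qed.
Lemma rB1 : Rp x1. Proof. by apply: ScB; do 2 right; left. Qed.
Lemma rB5n n : Rp (x5 ^+ n). Proof. by apply: ScB; do 3 right; left; exists n. Qed.
Lemma rB5n4 n : Rp (x5 ^+ n * x4). Proof. by apply: ScB; do 4 right; left; exists n. Qed.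
Lemma rB5n14 n : Rp (x5 ^+ n * x1 * x4). Proof. by apply: ScB; do 5 right; left; exists n. Qed.
Lemma rB5n1 n : Rp (x5 ^+ n.+1 * x1). Proof. by apply: ScB; do 6 right; left; exists n.+1. Qed.
Lemma rB35n n : Rp (x3 * x5 ^+ n.+1). Proof. by apply: ScB; do 7 right; left; exists n.+1. Qed.
Lemma rB15n n : Rp (x1 * x5 ^+ n.+1). Proof. by apply: ScB; do 8 right; left; exists n.+1. Qed.
Lemma rB35n4 n : Rp (x3 * x5 ^+ n * x4). Proof. by apply: ScB; do 9 right; left; exists n. Qed.
Lemma rB15n4 n : Rp (x1 * x5 ^+ n.+1 * x4). Proof. by apply: ScB; do 10 right; exists n.+1. Qed.
Lemma rB5 : Rp x5. Proof. by have := rB5n 1; rewrite expr1. Qed.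
Lemma rBone : Rp 1. Proof. by have := rB5n 0; rewrite expr0. Qed.
Lemma rB4 : Rp x4. Proof. by have := rB5n4 0; rewrite expr0 mul1r. Qed.
Lemma rB54 : Rp (x5 * x4). Proof. by have := rB5n4 1; rewrite expr1. Qed.
Lemma rB14 : Rp (x1 * x4). Proof. by have := rB5n14 0; rewrite expr0 mul1r. Qed.
Lemma rB514 : Rp (x5 * x1 * x4). Proof. by have := rB5n14 1; rewrite expr1. Qed.
Lemma rB51 : Rp (x5 * x1). Proof. by have := rB5n1 0; rewrite expr1. Qed.
Lemma rB35 : Rp (x3 * x5). Proof. by have := rB35n 0; rewrite expr1. Qed.
Lemma rB15 : Rp (x1 * x5). Proof. by have := rB15n 0; rewrite expr1. Qed.
Lemma rB34 : Rp (x3 * x4). Proof. by have := rB35n4 0; rewrite expr0 mulr1. Qed.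
Lemma rB354 : Rp (x3 * x5 * x4). Proof. by have := rB35n4 1; rewrite expr1. Qed.
Lemma rB154 : Rp (x1 * x5 * x4). Proof. by have := rB15n4 0; rewrite expr1. Qed.

Ltac rword := lazymatch goal with
 | |- Rp (x5 ^+ _ * x1 * x4) => apply: rB5n14
 | |- Rp (x5 * x1 * x4) => apply: rB514
 | |- Rp (x1 * x4) => apply: rB14
 | |- Rp (x3 * x5 ^+ _ * x4) => apply: rB35n4
 | |- Rp (x3 * x5 * x4) => apply: rB354
 | |- Rp (x3 * x4) => apply: rB34
 | |- Rp (x1 * x5 ^+ _.+1 * x4) => apply: rB15n4
 | |- Rp (x1 * x5 * x4) => apply: rB154
 | |- Rp (x5 ^+ _ * x4) => apply: rB5n4
 | |- Rp (x5 * x4) => apply: rB54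
 | |- Rp x4 => apply: rB4
 | |- Rp (x5 ^+ _.+1 * x1) => apply: rB5n1
 | |- Rp (x5 * x1) => apply: rB51
 | |- Rp x1 => apply: rB1
 | |- Rp (x4 * x1) => apply: rB41
 | |- Rp (x3 * x5 ^+ _.+1) => apply: rB35n
 | |- Rp (x3 * x5) => apply: rB35
 | |- Rp (x1 * x5 ^+ _.+1) => apply: rB15n
 | |- Rp (x1 * x5) => apply: rB15
 | |- Rp (x5 ^+ _) => apply: rB5n
 | |- Rp x5 => apply: rB5
 | |- Rp x3 => apply: rB3
 | |- Rp 1 => apply: rBone
 end.

Lemma pB41 : Pc (x4 * x1). Proof. by apply: ScB; left. Qed.
Lemma pB5n n : Pc (x5 ^+ n). Proof. by apply: ScB; right; left; exists n. Qed.
Lemma pB5n4 n : Pc (x5 ^+ n * x4). Proof. by apply: ScB; do 2 right; left; exists n. Qed.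
Lemma pB5n14 n : Pc (x5 ^+ n * x1 * x4). Proof. by apply: ScB; do 3 right; left; exists n. Qed.
Lemma pB5n1 n : Pc (x5 ^+ n * x1). Proof. by apply: ScB; do 4 right; exists n. Qed.
Lemma pB5 : Pc x5. Proof. by have := pB5n 1; rewrite expr1. Qed.
Lemma pB4 : Pc x4. Proof. by have := pB5n4 0; rewrite expr0 mul1r. Qed.
Lemma pB54 : Pc (x5 * x4). Proof. by have := pB5n4 1; rewrite expr1. Qed.
Lemma pB14 : Pc (x1 * x4). Proof. by have := pB5n14 0; rewrite expr0 mul1r. Qed.
Lemma pB514 : Pc (x5 * x1 * x4). Proof. by have := pB5n14 1; rewrite expr1. Qed.
Lemma pB51 : Pc (x5 * x1). Proof. by have := pB5n1 1; rewrite expr1. Qed.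
Lemma pB1 : Pc x1. Proof. by have := pB5n1 0; rewrite expr0 mul1r. Qed.

Ltac pword := lazymatch goal with
 | |- Pc (x5 ^+ _ * x1 * x4) => apply: pB5n14
 | |- Pc (x5 * x1 * x4) => apply: pB514
 | |- Pc (x1 * x4) => apply: pB14
 | |- Pc (x5 ^+ _ * x4) => apply: pB5n4
 | |- Pc (x5 * x4) => apply: pB54
 | |- Pc x4 => apply: pB4
 | |- Pc (x5 ^+ _ * x1) => apply: pB5n1
 | |- Pc (x5 * x1) => apply: pB51
 | |- Pc x1 => apply: pB1
 | |- Pc (x4 * x1) => apply: pB41
 | |- Pc (x5 ^+ _) => apply: pB5n
 | |- Pc x5 => apply: pB5
 end.

Ltac rfact F := apply: (ScJ _ _ _ F); rlin; rword.
Ltac pfact F := apply: (ScJ _ _ _ F); rlin; pword.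

Lemma Pc_R f : Pc f -> Rp f.
Proof.
apply: ScS => b [->|[[n ->]|[[n ->]|[[n ->]|[n ->]]]]]; try rword.
by case: n => [|n]; [rewrite expr0 mul1r; rword | rword].
Qed.

Lemma Pc5 f : Pc f -> Pc (x5 * f).
Proof.
apply: Sc_mull => b [->|[[n ->]|[[n ->]|[[n ->]|[n ->]]]]].
- rewrite mulrA; pfact F541.
- rewrite -exprS; pword.
- rewrite mulrA -exprS; pword.
- rewrite mulrA mulrA -exprS; pword.
- rewrite mulrA -exprS; pword.
Qed.

Lemma Pc5n n f : Pc f -> Pc (x5 ^+ n * f).
Proof.
elim: n => [|n IH] H; first by rewrite expr0 mul1r.
by rewrite exprS -mulrA; apply: Pc5; apply: IH.
Qed.

Lemma JL a f : J f -> J (a * f).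
Proof. by move=> H; rewrite -[a * f]mulr1; apply: JLR. Qed.


Lemma Bcases (P : A -> Prop) :
  P (x4 * x1) -> P x3 -> P x1 -> (forall n, P (x5 ^+ n)) -> (forall n, P (x5 ^+ n * x4)) ->
  (forall n, P (x5 ^+ n * x1 * x4)) -> (forall n, P (x5 ^+ n.+1 * x1)) ->
  (forall n, P (x3 * x5 ^+ n.+1)) -> (forall n, P (x1 * x5 ^+ n.+1)) ->
  (forall n, P (x3 * x5 ^+ n * x4)) -> (forall n, P (x1 * x5 ^+ n.+1 * x4)) ->
  forall b, Bset b -> P b.
Proof.
move=> H1 H2 H3 H4 H5 H6 H7 H8 H9 H10 H11 b.
case=> [->|[->|[->|[[n ->]|[[n ->]|[[n ->]|[[n [Hn ->]]|[[n [Hn ->]]|[[n [Hn ->]]|[[n ->]|[n [Hn ->]]]]]]]]]]]].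
- exact: H1.
- exact: H2.
- exact: H3.
- exact: H4.
- exact: H5.
- exact: H6.
- case: n Hn => [|n] Hn; [discriminate Hn | exact: H7].
- case: n Hn => [|n] Hn; [discriminate Hn | exact: H8].
- case: n Hn => [|n] Hn; [discriminate Hn | exact: H9].
- exact: H10.
- case: n Hn => [|n] Hn; [discriminate Hn | exact: H11].
Qed.

Lemma R5b b : Bset b -> Rp (b * x5).
Proof.
move: b; apply: (Bcases (fun b => Rp (b * x5))); cbv beta.
- rfact F415.
- rword.
- rword.
- move=> n; rewrite -exprSr; rword.
- move=> n; rewrite -mulrA; apply: ScJ0; apply: JL; exact: F45.
- move=> n; rewrite -mulrA; apply: ScJ0; apply: JL; exact: F45.
- move=> n; have H : Pc (x5 * x1 * x5) by pfact F515.
  have := Pc_R _ (Pc5n n _ H); rewrite !mulrA -exprSr; exact.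
- move=> n; rewrite -mulrA -exprSr; rword.
- move=> n; rewrite -mulrA -exprSr; rword.
- move=> n; rewrite -mulrA; apply: ScJ0; apply: JL; exact: F45.
- move=> n; rewrite -mulrA; apply: ScJ0; apply: JL; exact: F45.
Qed.

Lemma R5 f : Rp f -> Rp (f * x5).
Proof. exact: Sc_mulr R5b. Qed.

Lemma R4b b : Bset b -> Rp (b * x4).
Proof.
move: b; apply: (Bcases (fun b => Rp (b * x4))); cbv beta.
- rfact F414.
- rword.
- rword.
- move=> n; rword.
- move=> n; rewrite -mulrA; apply: ScJ0; apply: JL; exact: F44.
- move=> n; rewrite -mulrA; apply: ScJ0; apply: JL; exact: F44.
- move=> n; rword.
- move=> n; rword.
- move=> n; rword.
- move=> n; rewrite -mulrA; apply: ScJ0; apply: JL; exact: F44.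
- move=> n; rewrite -mulrA; apply: ScJ0; apply: JL; exact: F44.
Qed.

Lemma R4 f : Rp f -> Rp (f * x4).
Proof. exact: Sc_mulr R4b. Qed.

Lemma T1 y : (forall m, Rp (y * x5 ^+ m * x4)) -> Rp (y * x5 * x1) ->
  forall n, Rp (y * x5 ^+ n.+1 * x1).
Proof.
move=> Hy4 Hy1; elim=> [|n IH]; first by rewrite expr1.
have H := JLw (y * x5 ^+ n) _ _ F515.
apply: (ScJ _ _ ((y * x5 ^+ n.+1 * x1) * x5 - y * x5 ^+ n.+1 * x4)).
  have -> : y * x5 ^+ n.+2 * x1 - (y * x5 ^+ n.+1 * x1 * x5 - y * x5 ^+ n.+1 * x4) =
    - (y * x5 ^+ n * (x5 * x1 * x5) - y * x5 ^+ n * (x5 ^+ 2 * x1 + x5 * x4)).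
    rewrite !exprSr; nc_eq [:: x1; x3; x4; x5; y; x5 ^+ n].
  by apply: JN.
apply: ScBs; [apply: R5; exact: IH | exact: Hy4].
Qed.


Lemma x3_4 k : Rp (x3 * x5 ^+ k * x4). Proof. exact: rB35n4. Qed.
Lemma x1_4 k : Rp (x1 * x5 ^+ k * x4).
Proof. case: k => [|k]; [rewrite expr0 mulr1; rword | exact: rB15n4]. Qed.
Lemma x3_5 k : Rp (x3 * x5 ^+ k.+1). Proof. exact: rB35n. Qed.
Lemma x1_5 k : Rp (x1 * x5 ^+ k.+1). Proof. exact: rB15n. Qed.
Lemma x3_1 k : Rp (x3 * x5 ^+ k.+1 * x1).
Proof. apply: T1; [exact: x3_4 | rfact F351]. Qed.
Lemma x1_1 k : Rp (x1 * x5 ^+ k.+1 * x1).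
Proof. apply: T1; [exact: x1_4 | rfact F151]. Qed.

Lemma G10 y m : (forall k, Rp (y * x5 ^+ k.+1 * x1)) -> (forall k, Rp (y * x5 ^+ k.+1)) ->
  Rp (y * x5 ^+ m.+1 * x4 * x1).
Proof.
move=> Hy1 Hy5.
have H := JLw (y * x5 ^+ m) _ _ F541.
apply: (ScJ _ _ (0 - (y * x5 ^+ m.+1 * x1) * x4 - y * x5 ^+ m.+2 * x1 + y * x5 ^+ m.+3)).
  have -> : y * x5 ^+ m.+1 * x4 * x1 - (0 - (y * x5 ^+ m.+1 * x1) * x4 - y * x5 ^+ m.+2 * x1 + y * x5 ^+ m.+3) =
    y * x5 ^+ m * (x5 * x4 * x1) - y * x5 ^+ m * (0 - x5 * x1 * x4 - x5 ^+ 2 * x1 + x5 ^+ 3).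
    rewrite !exprSr; nc_eq [:: x1; x3; x4; x5; y; x5 ^+ m].
  exact: H.
rlin; [apply: R4; exact: Hy1 | exact: Hy1 | exact: Hy5].
Qed.

Lemma R1b b : Bset b -> Rp (b * x1).
Proof.
move: b; apply: (Bcases (fun b => Rp (b * x1))); cbv beta.
- apply: (ScJ _ _ (x4 * x1)); [rewrite -mulrA; exact: (JLw x4 _ _ F11) | rword].
- rfact F31.
- rfact F11.
- by case=> [|n]; [rewrite expr0 mul1r; rword | rword].
- move=> n; rewrite -mulrA; apply: Pc_R; apply: Pc5n; pword.
- case=> [|n]; first by rewrite expr0 mul1r; rfact F141.
  have H : Pc (x5 * x1 * x4 * x1) by pfact F5141.
  have := Pc_R _ (Pc5n n _ H); rewrite !mulrA -exprSr; exact.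
- move=> n; apply: (ScJ _ _ (x5 ^+ n.+1 * x1)); [rewrite -mulrA; exact: (JLw _ _ _ F11) | rword].
- exact: x3_1.
- exact: x1_1.
- case=> [|n]; first by rewrite expr0 mulr1; rfact F341.
  apply: G10; [exact: x3_1 | exact: x3_5].
- move=> n; apply: G10; [exact: x1_1 | exact: x1_5].
Qed.

Lemma R1 f : Rp f -> Rp (f * x1).
Proof. exact: Sc_mulr R1b. Qed.

Lemma G8 y n : (forall k, Rp (y * x5 ^+ k.+1 * x1)) -> (forall k, Rp (y * x5 ^+ k.+1)) ->
  (forall k, Rp (y * x5 ^+ k * x4)) -> Rp (y * x5 ^+ n.+1 * x3).
Proof.
move=> Hy1 Hy5 Hy4.
have H := JLw (y * x5 ^+ n) _ _ F53.
apply: (ScJ _ _ (2%:R *: (y * x5 ^+ n * x4 * x1) + y * x5 ^+ n.+1 * x1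
   - 2%:R *: (y * x5 ^+ n.+2) - 2%:R *: (y * x5 ^+ n * x4))).
  have -> : y * x5 ^+ n.+1 * x3 - (2%:R *: (y * x5 ^+ n * x4 * x1) + y * x5 ^+ n.+1 * x1
   - 2%:R *: (y * x5 ^+ n.+2) - 2%:R *: (y * x5 ^+ n * x4)) =
    y * x5 ^+ n * (x5 * x3) - y * x5 ^+ n * (2%:R *: (x4 * x1) + x5 * x1 - 2%:R *: (x5 ^+ 2) - 2%:R *: x4).
    rewrite !exprSr; nc_eq [:: x1; x3; x4; x5; y; x5 ^+ n].
  exact: H.
rlin; [apply: R1; exact: Hy4 | exact: Hy1 | exact: Hy5 | exact: Hy4].
Qed.

Lemma G43 y n : (forall k, Rp (y * x5 ^+ k.+1)) ->
  (forall k, Rp (y * x5 ^+ k * x4)) -> Rp (y * x5 ^+ n * x4 * x3).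
Proof.
move=> Hy5 Hy4.
have H := JLw (y * x5 ^+ n) _ _ F43.
apply: (ScJ _ _ (0 - y * x5 ^+ n * x4 * x1 + y * x5 ^+ n.+1 * x4 + y * x5 ^+ n.+2
   + 2%:R *: (y * x5 ^+ n * x4))).
  have -> : y * x5 ^+ n * x4 * x3 - (0 - y * x5 ^+ n * x4 * x1 + y * x5 ^+ n.+1 * x4 + y * x5 ^+ n.+2
   + 2%:R *: (y * x5 ^+ n * x4)) =
    y * x5 ^+ n * (x4 * x3) - y * x5 ^+ n * (0 - x4 * x1 + x5 * x4 + x5 ^+ 2 + 2%:R *: x4).
    rewrite !exprSr; nc_eq [:: x1; x3; x4; x5; y; x5 ^+ n].
  exact: H.
rlin; [apply: R1; exact: Hy4 | exact: Hy4 | exact: Hy5 | exact: Hy4].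
Qed.

Lemma R3b b : Bset b -> Rp (b * x3).
Proof.
move: b; apply: (Bcases (fun b => Rp (b * x3))); cbv beta.
- rfact F413.
- rfact F33.
- rfact F13.
- case=> [|n]; first by rewrite expr0 mul1r; rword.
  have H : Pc (x5 * x3) by pfact F53.
  have := Pc_R _ (Pc5n n _ H); rewrite !mulrA -exprSr; exact.
- move=> n; have H : Pc (x4 * x3) by pfact F43.
  have := Pc_R _ (Pc5n n _ H); rewrite !mulrA; exact.
- case=> [|n]; first by rewrite expr0 mul1r; rfact F143.
  have H : Pc (x5 * x1 * x4 * x3) by pfact F5143.
  have := Pc_R _ (Pc5n n _ H); rewrite !mulrA -exprSr; exact.
- move=> n; have H : Pc (x5 * x1 * x3) by pfact F513.
  have := Pc_R _ (Pc5n n _ H); rewrite !mulrA -exprSr; exact.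
- move=> n; apply: G8; [exact: x3_1 | exact: x3_5 | exact: x3_4].
- move=> n; apply: G8; [exact: x1_1 | exact: x1_5 | exact: x1_4].
- move=> n; apply: G43; [exact: x3_5 | exact: x3_4].
- move=> n; apply: G43; [exact: x1_5 | exact: x1_4].
Qed.

Lemma R3 f : Rp f -> Rp (f * x3).
Proof. exact: Sc_mulr R3b. Qed.


Lemma malgUZ (c : K) (k : fmonom 'I_4) : << c *g k >> = c *: (<< k >> : A).
Proof.
apply/malgP => k'; rewrite mcoeffZ !mcoeffU.
by case: (k == k'); rewrite ?mulr1 ?mulr0.
Qed.

Lemma malgUM (k1 k2 : fmonom 'I_4) : (<< k1 >> : A) * << k2 >> = << mmul k1 k2 >>.
Proof. by rewrite malgM_def fgmulUU mulr1. Qed.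

Lemma letter_cases (i : 'I_4) : (<< fmu i >> : A) = x1 \/ (<< fmu i >> : A) = x3 \/
  (<< fmu i >> : A) = x4 \/ (<< fmu i >> : A) = x5.
Proof.
have E : forall j : 'I_4, j = i -> (<< fmu i >> : A) = letter K j by move=> j ->.
case: i E => [[|[|[|[|j]]]] Hi] E //.
- by left; apply: E; apply: val_inj.
- by right; left; apply: E; apply: val_inj.
- by right; right; left; apply: E; apply: val_inj.
- by right; right; right; apply: E; apply: val_inj.
Qed.

Lemma Rmon (k : fmonom 'I_4) : Rp << k >>.
Proof.
case: k => s; elim/last_ind: s => [|s i IH].
  have -> : FMonom [::] = (mone : fmonom 'I_4).
    by apply: val_inj; change ([::] = fmonom_val (mone : fmonom 'I_4)); rewrite fm1.
  by rewrite mpolyC1E; rword.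
have -> : FMonom (rcons s i) = mmul (FMonom s) (fmu i).
  apply: val_inj; change (rcons s i = fmonom_val (mmul (FMonom s) (fmu i))).
  by rewrite fmM fmU cats1.
rewrite -malgUM.
have [->|[->|[->|->]]] := letter_cases i.
- exact: R1.
- exact: R3.
- exact: R4.
- exact: R5.
Qed.

Lemma Rall (f : A) : Rp f.
Proof.
have Hs : forall s : seq (fmonom 'I_4), Rp (\sum_(k <- s) << f@_k *g k >>).
  elim=> [|k s IH]; first by rewrite big_nil; exact: Sc0.
  rewrite big_cons; apply: ScD => //.
  rewrite malgUZ; apply: ScZ; exact: Rmon.
rewrite [f]monalgE; exact: Hs.
Qed.


End Main.


Theorem lemma4 (K : fieldType) (charK0 : [pchar K] =i pred0) :
  forall f : freeAlg K,
    exists s : seq (K * freeAlg K),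
      (forall t, t \in s -> Bset t.2) /\
      inI (f - \sum_(t <- s) t.1 *: t.2).
Proof. move=> f; exact: (Rall K charK0 f). Qed.
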